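(* Let $\kappa\ge3$. For any GTR parameters $\boldsymbol\pi,Q$ and any matrix $U$ diagonalizing $Q$ as in the context, there exist indices $i,j,k\in\{2,\dots,\kappa\}$ with $\nu_{ijk}\neq0$.
   Context: $\boldsymbol\pi=(\pi_1,\dots,\pi_\kappa)$ with $\pi_i>0$ and $\sum\pi_i=1$; $Q$ a $\kappa\times\kappa$ matrix with positive off-diagonal entries, zero row sums and $\operatorname{diag}(\boldsymbol\pi)Q$ symmetric. $U$ is a real matrix with $Q=U\operatorname{diag}(0,\lambda_2,\dots,\lambda_\kappa)U^{-1}$, $0>\lambda_2\ge\dots\ge\lambda_\kappa$, $UU^T=\operatorname{diag}(\boldsymbol\pi)^{-1}$ (equivalently $U^T\operatorname{diag}(\boldsymbol\pi)U=I$), and first column $\mathbf 1$. $\nu_{ijk}=\sum_l\pi_lU_{li}U_{lj}U_{lk}$. *)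

(* Defs.v *)
From HB Require Import structures.
From mathcomp Require Import all_boot all_order all_algebra.
Set Implicit Arguments. Unset Strict Implicit. Unset Printing Implicit Defensive.
Import Order.TTheory GRing.Theory Num.Theory.
Local Open Scope ring_scope.

(* nu_{ijl} = \sum_m pi_m U_{mi} U_{mj} U_{ml}; pi is a row vector,
   indices are 0-based ('I_k), so paper index 1 is Rocq index 0. *)
Definition nu (R : nzRingType) (k : nat) (pi : 'rV[R]_k) (U : 'M[R]_k)
  (i j l : 'I_k) : R :=
  \sum_(m < k) pi 0 m * U m i * U m j * U m l.

(* Main.v *)
Require Import Defs.
From HB Require Import structures.
From mathcomp Require Import all_boot all_order all_algebra.
Import Order.TTheory GRing.Theory Num.Theory.
Local Open Scope ring_scope.

Lemma orth_entry (R : realFieldType) (k : nat) (pi : 'rV[R]_k) (U : 'M[R]_k) i j :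
  (U^T *m diag_mx pi *m U) i j = \sum_m pi 0 m * U m i * U m j.
Proof.
rewrite mxE; apply: eq_bigr => m _; rewrite mul_mx_diag !mxE.
by rewrite (mulrC (U m i)).
Qed.

Lemma expand (R : realFieldType) (k : nat) (pi : 'rV[R]_k) (U : 'M[R]_k)
  (g : 'I_k -> R) l :
  U^T *m diag_mx pi *m U = 1%:M ->
  g l = \sum_(c < k) (\sum_(m < k) pi 0 m * g m * U m c) * U l c.
Proof.
move=> H.
have H2 : U *m (U^T *m diag_mx pi) = 1%:M by apply: mulmx1C.
have E : forall m, \sum_(c < k) U l c * U m c * pi 0 m = (l == m)%:R.
  move=> m; have := congr1 (fun A : 'M[R]_k => A l m) H2; rewrite /= mxE !mxE => <-.
  by apply: eq_bigr => c _; rewrite mul_mx_diag !mxE mulrA.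
under eq_bigr do rewrite big_distrl /=.
rewrite exchange_big /=.
rewrite (bigD1 l) //= [X in _ + X]big1 ?addr0.
  have El : \sum_(c < k) U l c * U l c * pi 0 l = 1 by rewrite E eqxx.
  rewrite -{1}(mulr1 (g l)) -El big_distrr /=; apply: eq_bigr => c _.
  by rewrite [pi 0 l * g l]mulrC -!mulrA; congr (_ * _); rewrite [RHS]mulrC mulrA.
move=> m /negbTE Hm.
have E0 : \sum_(c < k) U l c * U m c * pi 0 m = 0 by rewrite E eq_sym Hm.
transitivity (g m * \sum_(c < k) U l c * U m c * pi 0 m); last by rewrite E0 mulr0.
rewrite big_distrr /=; apply: eq_bigr => c _.
rewrite [pi 0 m * g m]mulrC -!mulrA; congr (_ * _).
by rewrite mulrC -mulrA mulrCA mulrC.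
Qed.

Theorem proposition2 (R : realFieldType) (k : nat) (hk : (3 <= k)%N)
  (pi : 'rV[R]_k) (Q U : 'M[R]_k) (lam : 'rV[R]_k) :
  (forall i, 0 < pi 0 i) ->
  \sum_(i < k) pi 0 i = 1 ->
  (forall i j : 'I_k, i != j -> 0 < Q i j) ->
  (forall i : 'I_k, \sum_(j < k) Q i j = 0) ->
  (diag_mx pi *m Q)^T = diag_mx pi *m Q ->
  (forall i : 'I_k, nat_of_ord i = 0%N -> lam 0 i = 0) ->
  (forall i : 'I_k, (0 < i)%N -> lam 0 i < 0) ->
  (forall i j : 'I_k, (0 < i)%N -> (i <= j)%N -> lam 0 j <= lam 0 i) ->
  U \in unitmx ->
  Q = U *m diag_mx lam *m invmx U ->
  U^T *m diag_mx pi *m U = 1%:M ->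
  (forall m i : 'I_k, nat_of_ord i = 0%N -> U m i = 1) ->
  exists i j l : 'I_k,
    [/\ (0 < i)%N, (0 < j)%N, (0 < l)%N & nu pi U i j l != 0].
Proof.
move=> pipos _ _ _ _ _ _ _ _ _ HO H1.
have [/existsP [i /existsP [j /existsP [l /and4P [a b c d]]]]|Hn] :=
  boolP [exists i : 'I_k, exists j : 'I_k, exists l : 'I_k,
           [&& (0 < i)%N, (0 < j)%N, (0 < l)%N & nu pi U i j l != 0]].
  by exists i, j, l.
exfalso.
have Hz : forall i j l : 'I_k, (0 < i)%N -> (0 < j)%N -> (0 < l)%N -> nu pi U i j l = 0.
  move=> i j l a b c; apply/eqP; apply/negPn/negP => d; move/negP: Hn; apply.
  by apply/existsP; exists i; apply/existsP; exists j; apply/existsP; exists l; apply/and4P.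
have k0 : (0 < k)%N by apply: leq_trans hk.
have k1 : (1 < k)%N by apply: leq_trans hk.
have k2 : (2 < k)%N by [].
pose z := Ordinal k0; pose i1 := Ordinal k1; pose i2 := Ordinal k2.
have Eo := @orth_entry R k pi U.
rewrite HO in Eo.
have key : forall (p q : 'I_k), (0 < p)%N -> (0 < q)%N -> forall l,
    U l p * U l q = (p == q)%:R.
  move=> p q hp hq l.
  rewrite (@expand R k pi U (fun m => U m p * U m q) l HO) (bigD1 z) //= [X in _ + X]big1 ?addr0.
    rewrite H1 // mulr1; transitivity ((1%:M : 'M[R]_k) p q); last by rewrite mxE.
    rewrite Eo; apply: eq_bigr => m _.
    by rewrite (H1 m z) // mulr1 mulrA.
  move=> c hc; rewrite -[RHS](mul0r (U l c)); congr (_ * _).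
  have hc' : (0 < c)%N by rewrite lt0n; apply: contra hc => /eqP h; apply/eqP/val_inj.
  transitivity (nu pi U p q c); last exact: Hz.
  rewrite /nu; apply: eq_bigr => m _; by rewrite mulrA.
have b0 : forall l, U l i2 = 0.
  move=> l; have h1 := key i1 i1 isT isT l; have h2 := key i1 i2 isT isT l.
  rewrite eqxx in h1; rewrite /= in h2.
  have : U l i1 * (U l i1 * U l i2) = U l i2 by rewrite mulrA h1 mul1r.
  by rewrite h2 mulr0 => <-.
have := Eo i2 i2; rewrite !mxE eqxx big1 => [|m _]; last by rewrite b0 mulr0.
by move/eqP; rewrite oner_eq0.
Qed.
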